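(* Let $H_1$ and $H_2$ be vertex-disjoint connected graphs, each with at least two vertices, let $w\in V(H_1)$ and $v\in V(H_2)$, and let $k=\varepsilon_{H_1}(w)$. Let $l\geqslant 1$ be an integer with $k\geqslant l+1$. Let $G$ be the graph obtained from $H_1\cup H_2$ by adding the edge $wv$ and a path $vu_1u_2\ldots u_l$, where $u_1,\ldots,u_l$ are new vertices (so $wv$ is a cut edge of $G$ and $vu_1\ldots u_l$ is a pendant path at $v$). Let $$G'=G-\{vx: x\in N_{H_2}(v)\}+\{wx: x\in N_{H_2}(v)\}.$$ Then $\xi^{ee}(G)<\xi^{ee}(G')$.
   Context: All graphs are finite, simple and connected. For a vertex $x$ of a connected graph $G$, $\varepsilon_G(x)$ is the eccentricity of $x$ (the largest distance from $x$ to a vertex of $G$) and $d_G(x)$ its degree; $N_H(v)$ is the set of neighbours of $v$ in $H$. The total reciprocal edge-eccentricity of $G$ is $\xi^{ee}(G)=\sum_{uv\in E(G)}\left(\frac{1}{\varepsilon_G(u)}+\frac{1}{\varepsilon_G(v)}\right)=\sum_{x\in V(G)}\frac{d_G(x)}{\varepsilon_G(x)}$. *)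

(* Defs.v *)
From mathcomp Require Import all_boot all_order all_algebra.
Set Implicit Arguments. Unset Strict Implicit. Unset Printing Implicit Defensive.
Import Order.TTheory GRing.Theory Num.Theory.

Definition simple_graph (T : finType) (e : rel T) : Prop :=
  symmetric e /\ irreflexive e.
Definition connected_graph (T : finType) (e : rel T) : Prop :=
  forall x y, connect e x y.

Fixpoint ball (T : finType) (e : rel T) (n : nat) (x : T) : {set T} :=
  match n with
  | 0 => [set x]
  | n'.+1 => [set y | (y \in ball e n' x) || [exists z in ball e n' x, e z y]]
  end.

(* graph distance: least n with y in ball n x (= #|T| if unreachable,
   which never happens in a connected graph) *)
Definition dist (T : finType) (e : rel T) (x y : T) : nat :=
  find (fun n => y \in ball e n x) (iota 0 #|T|).

Definition ecc (T : finType) (e : rel T) (x : T) : nat :=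
  \max_(y : T) dist e x y.

Definition deg (T : finType) (e : rel T) (x : T) : nat := #|[set y | e x y]|.

Definition xi_ee (T : finType) (e : rel T) : rat :=
  (\sum_(x : T) (deg e x)%:R / (ecc e x)%:R)%R.

(* Vertex set of G: V(H1) + V(H2) + {u_1,...,u_l}, u_(i+1) represented by i : 'I_l *)
Definition GV (T1 T2 : finType) (l : nat) : finType := ((T1 + T2) + 'I_l)%type.

Definition G_edge (T1 T2 : finType) (e1 : rel T1) (e2 : rel T2) (w : T1) (v : T2)
  (l : nat) : rel (GV T1 T2 l) :=
  fun a b =>
  match a, b with
  | inl (inl x), inl (inl y) => e1 x y
  | inl (inr x), inl (inr y) => e2 x y
  | inl (inl x), inl (inr y) => (x == w) && (y == v)
  | inl (inr x), inl (inl y) => (x == v) && (y == w)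
  | inl (inr x), inr i => (x == v) && (nat_of_ord i == 0)
  | inr i, inl (inr x) => (x == v) && (nat_of_ord i == 0)
  | inr i, inr j => (nat_of_ord j == (nat_of_ord i).+1) || (nat_of_ord i == (nat_of_ord j).+1)
  | _, _ => false
  end.

Definition G'_edge (T1 T2 : finType) (e1 : rel T1) (e2 : rel T2) (w : T1) (v : T2)
  (l : nat) : rel (GV T1 T2 l) :=
  fun a b =>
  match a, b with
  | inl (inl x), inl (inl y) => e1 x y
  | inl (inr x), inl (inr y) => [&& e2 x y, x != v & y != v]
  | inl (inl x), inl (inr y) => (x == w) && ((y == v) || e2 v y)
  | inl (inr x), inl (inl y) => ((x == v) || e2 v x) && (y == w)
  | inl (inr x), inr i => (x == v) && (nat_of_ord i == 0)
  | inr i, inl (inr x) => (x == v) && (nat_of_ord i == 0)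
  | inr i, inr j => (nat_of_ord j == (nat_of_ord i).+1) || (nat_of_ord i == (nat_of_ord j).+1)
  | _, _ => false
  end.
Arguments G_edge {T1 T2} e1 e2 w v l.
Arguments G'_edge {T1 T2} e1 e2 w v l.

(* Main.v *)
Require Import Defs.
From mathcomp Require Import all_boot all_order all_algebra.
From mathcomp Require Import zify ring lra.
Import Order.TTheory GRing.Theory Num.Theory.
Set Implicit Arguments. Unset Strict Implicit. Unset Printing Implicit Defensive.

Lemma ball_S (T : finType) (e : rel T) n x y :
  (y \in ball e n.+1 x) = (y \in ball e n x) || [exists z in ball e n x, e z y].
Proof. by rewrite /= inE. Qed.

Lemma ball0 (T : finType) (e : rel T) (x y : T) : (y \in ball e 0 x) = (y == x).
Proof. by rewrite /= inE. Qed.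

Lemma ball_sub (T : finType) (e : rel T) n (x y : T) :
  y \in ball e n x -> y \in ball e n.+1 x.
Proof. by move=> h; rewrite ball_S h. Qed.

Lemma ball_le (T : finType) (e : rel T) n m (x y : T) :
  n <= m -> y \in ball e n x -> y \in ball e m x.
Proof.
move=> hnm h; rewrite -(subnK hnm); elim: (m - n) => [|k IH] //.
rewrite addSn; exact: ball_sub.
Qed.

Lemma ball_self (T : finType) (e : rel T) n (x : T) : x \in ball e n x.
Proof. elim: n => [|n IH]; [by rewrite ball0|exact: ball_sub]. Qed.

Lemma ball_edge (T : finType) (e : rel T) n (x y z : T) :
  y \in ball e n x -> e y z -> z \in ball e n.+1 x.
Proof.
move=> hy hz; rewrite ball_S; apply/orP; right; apply/existsP; exists y; by rewrite hy.
Qed.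

Lemma ball_trans (T : finType) (e : rel T) n m (x y z : T) :
  y \in ball e n x -> z \in ball e m y -> z \in ball e (n + m) x.
Proof.
move=> hy; elim: m z => [|m IH] z.
  by rewrite ball0 addn0 => /eqP ->.
rewrite ball_S => /orP [/IH h|/existsP [c /andP [hc hcz]]]; rewrite addnS.
  exact: ball_sub.
exact: ball_edge (IH _ hc) hcz.
Qed.

Lemma ball_hom (T T' : finType) (e : rel T) (e' : rel T') (f : T -> T') n x y :
  (forall a b, e a b -> e' (f a) (f b)) -> y \in ball e n x -> f y \in ball e' n (f x).
Proof.
move=> hf; elim: n y => [|n IH] y; first by rewrite !ball0 => /eqP ->.
rewrite ball_S => /orP [/IH h|/existsP [c /andP [hc hcy]]]; first exact: ball_sub.
exact: ball_edge (IH _ hc) (hf _ _ hcy).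
Qed.

Lemma ball_lip (T : finType) (e : rel T) (phi : T -> nat) n x y :
  (forall a b, e a b -> phi b <= phi a + 1) -> y \in ball e n x -> phi y <= phi x + n.
Proof.
move=> hp; elim: n y => [|n IH] y; first by rewrite ball0 addn0 => /eqP ->.
rewrite ball_S => /orP [/IH h|/existsP [c /andP [hc hcy]]]; first lia.
have := IH _ hc; have := hp _ _ hcy; lia.
Qed.

Lemma ball_sym (T : finType) (e : rel T) n (x y : T) :
  symmetric e -> y \in ball e n x -> x \in ball e n y.
Proof.
move=> se; elim: n y => [|n IH] y; first by rewrite !ball0 eq_sym.
rewrite ball_S => /orP [/IH h|/existsP [c /andP [hc hcy]]]; first exact: ball_sub.
have h1 : c \in ball e 1 y by apply: (ball_edge (ball_self e 0 y)); rewrite se.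
by have := ball_trans h1 (IH _ hc); rewrite add1n.
Qed.

Lemma ball_connect (T : finType) (e : rel T) n (x y : T) :
  y \in ball e n x -> connect e x y.
Proof.
elim: n y => [|n IH] y; first by rewrite ball0 => /eqP ->; exact: connect0.
rewrite ball_S => /orP [/IH //|/existsP [c /andP [hc hcy]]].
exact: connect_trans (IH _ hc) (connect1 hcy).
Qed.

Lemma path_ball (T : finType) (e : rel T) (x : T) p :
  path e x p -> last x p \in ball e (size p) x.
Proof.
elim: p x => [|a p IH] x /=; first by rewrite ball0.
move=> /andP [hxa hp].
have := ball_trans (ball_edge (ball_self e 0 x) hxa) (IH _ hp). by rewrite add1n.
Qed.

Lemma dist_le (T : finType) (e : rel T) (x y : T) n :
  y \in ball e n x -> dist e x y <= n.
Proof.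
move=> h; rewrite /dist.
case: (leqP (find (fun n => y \in ball e n x) (iota 0 #|T|)) n) => // lt.
have hs : n < #|T|.
  have := find_size (fun n0 => y \in ball e n0 x) (iota 0 #|T|); rewrite size_iota; lia.
have := before_find 0 lt; by rewrite nth_iota // add0n h.
Qed.

Lemma dist_ball (T : finType) (e : rel T) (x y : T) :
  connect e x y -> y \in ball e (dist e x y) x.
Proof.
move=> /connectP [p hp ->]; case/shortenP: hp => p' hp' hu _.
have hb := path_ball hp'.
have hsz : size p' < #|T|.
  move/card_uniqP: hu => /= hu; have := max_card (mem (x :: p')); rewrite hu /=; lia.
rewrite /dist.
have hh : has (fun n => last x p' \in ball e n x) (iota 0 #|T|).
  apply/hasP; exists (size p') => //; rewrite mem_iota; lia.
have := nth_find 0 hh; rewrite nth_iota ?add0n //.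
by have := hh; rewrite has_find size_iota.
Qed.


Lemma dist_lip (T : finType) (e : rel T) (phi : T -> nat) (x y : T) :
  connected_graph e -> (forall a b, e a b -> phi b <= phi a + 1) ->
  phi y <= phi x + dist e x y.
Proof. move=> hc hp; exact: ball_lip hp (dist_ball (hc x y)). Qed.

Lemma dist_self (T : finType) (e : rel T) (x : T) : dist e x x = 0.
Proof. by apply/eqP; rewrite -leqn0; apply: dist_le; exact: (ball_self e 0 x). Qed.

Lemma dist_tri (T : finType) (e : rel T) (x y z : T) : connected_graph e ->
  dist e x z <= dist e x y + dist e y z.
Proof. move=> hc; apply: dist_le; exact: ball_trans (dist_ball (hc _ _)) (dist_ball (hc _ _)). Qed.

Lemma dist_sym (T : finType) (e : rel T) (x y : T) : symmetric e -> connected_graph e ->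
  dist e x y = dist e y x.
Proof.
move=> hs hc; apply/eqP; rewrite eqn_leq; apply/andP; split; apply: dist_le;
  apply: ball_sym hs _; exact: dist_ball.
Qed.

Lemma dist_edge (T : finType) (e : rel T) (x y z : T) : connected_graph e -> e y z ->
  dist e x z <= dist e x y + 1.
Proof. move=> hc he; apply: dist_le; rewrite addn1; exact: ball_edge (dist_ball (hc _ _)) he. Qed.

Lemma dist0 (T : finType) (e : rel T) (x y : T) : connected_graph e -> dist e x y = 0 -> y = x.
Proof. by move=> hc h; have := dist_ball (hc x y); rewrite h ball0 => /eqP. Qed.

Lemma dist_pos (T : finType) (e : rel T) (x y : T) : connected_graph e -> x != y -> 0 < dist e x y.
Proof. move=> hc hxy; rewrite lt0n; apply/eqP => /(dist0 hc) h; by rewrite h eqxx in hxy. Qed.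

Lemma ecc_ge (T : finType) (e : rel T) (x y : T) : dist e x y <= ecc e x.
Proof. exact: leq_bigmax. Qed.

Lemma ecc_le (T : finType) (e : rel T) (x : T) n : (forall y, dist e x y <= n) -> ecc e x <= n.
Proof. move=> h; apply/bigmax_leqP => y _; exact: h. Qed.

Lemma ecc_pos (T : finType) (e : rel T) (x y : T) : connected_graph e -> x != y -> 0 < ecc e x.
Proof. move=> hc hxy; exact: leq_trans (dist_pos hc hxy) (ecc_ge e x y). Qed.

Lemma descend (T : finType) (e : rel T) (x y : T) n : connected_graph e -> symmetric e ->
  dist e x y = n.+1 -> exists c, e y c /\ dist e x c = n.
Proof.
move=> hc hs hd; have hy := dist_ball (hc x y); rewrite hd ball_S in hy.
case/orP: hy => [h|/existsP [c /andP [hcb hcy]]]; first by have := dist_le h; lia.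
exists c; split; first by rewrite hs.
have h1 := dist_le hcb; have h2 := dist_edge x hc hcy; lia.
Qed.

Lemma levels (T : finType) (e : rel T) (x : T) : connected_graph e -> symmetric e ->
  forall n y, dist e x y = n -> forall j, j <= n ->
  exists z, dist e x z = j /\ (j < n -> exists b, e z b /\ dist e x b = j.+1).
Proof.
move=> hc hs; elim=> [|n IH] y hy j hj.
  by exists y; split; [lia|].
have [->|hjn] := eqVneq j n.+1; first by exists y; split; [|lia].
have [c [hyc hc']] := descend hc hs hy.
have [->|hjn'] := eqVneq j n.
  exists c; split => // _; exists y; split => //; by rewrite hs.
have [z [hz1 hz2]] := IH c hc' j ltac:(lia).
exists z; split => // _; apply: hz2; lia.
Qed.

Lemma ecc_attained (T : finType) (e : rel T) (x : T) : exists y, dist e x y = ecc e x.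
Proof.
have h : 0 < #|T| by apply/card_gt0P; exists x.
case: (@bigop.eq_bigmax _ (fun y => dist e x y) h) => y hy; exists y; by rewrite /ecc hy.
Qed.

Lemma tle (n n' c d : nat) : (n <= n')%N -> (0 < c)%N -> (c <= d)%N ->
  (n%:R / d%:R <= n'%:R / c%:R :> rat)%R.
Proof.
move=> hn hc hd; apply: (@le_trans _ _ (n'%:R / d%:R)%R).
  by apply: ler_wpM2r; [rewrite invr_ge0 ler0n | rewrite ler_nat].
apply: ler_wpM2l; first exact: ler0n.
rewrite lef_pV2 ?posrE ?ltr0n ?ler_nat //; exact: leq_trans hc hd.
Qed.
Lemma tlt (n c d : nat) : (0 < n)%N -> (0 < c)%N -> (c < d)%N ->
  (n%:R / d%:R < n%:R / c%:R :> rat)%R.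
Proof.
move=> hn hc hd; rewrite ltr_pM2l ?ltr0n //.
rewrite ltf_pV2 ?posrE ?ltr0n ?ltr_nat //; exact: leq_trans hc (ltnW hd).
Qed.

Ltac geninv := repeat match goal with |- context [GRing.inv ?x] => let z := fresh "z" in move: (GRing.inv x) => z end.

Lemma invlt (c : nat) : (0 < c)%N -> ((c.+1)%:R^-1 < (c%:R)^-1 :> rat)%R.
Proof. move=> hc; have := tlt (isT : (0 < 1)%N) hc (ltnSn c); by rewrite !mul1r. Qed.

Section Main.
Variables (T1 T2 : finType) (e1 : rel T1) (e2 : rel T2) (w : T1) (v : T2) (l' : nat).
Hypotheses (s1 : symmetric e1) (i1 : irreflexive e1) (c1 : connected_graph e1).
Hypotheses (s2 : symmetric e2) (i2 : irreflexive e2) (c2 : connected_graph e2).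
Hypothesis card2 : 1 < #|T2|.
Hypothesis hK : l'.+2 <= ecc e1 w.

Local Notation l := l'.+1.
Local Notation GVt := (GV T1 T2 l).
Local Notation E := (G_edge e1 e2 w v l).
Local Notation E' := (G'_edge e1 e2 w v l).
Local Notation A a := (inl (inl a) : GVt).
Local Notation B b := (inl (inr b) : GVt).
Local Notation U i := (inr i : GVt).
Local Notation W := (A w).
Local Notation V := (B v).
Local Notation d1 := (dist e1).
Local Notation d2 := (dist e2).
Local Notation K := (ecc e1 w).
Local Notation R := (ecc e2 v).

Lemma symE : symmetric E.
Proof.
move=> [[a|b]|i] [[a'|b']|i'] //=; first [exact: s1 | exact: s2 | exact: andbC | exact: orbC].
Qed.

Lemma symE' : symmetric E'.
Proof.
move=> [[a|b]|i] [[a'|b']|i'] //=; first [exact: s1 | exact: andbC | exact: orbC | idtac].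
by rewrite s2 [(b != v) && _]andbC.
Qed.

Lemma pathU (e : rel GVt) :
  (forall i : 'I_l, val i = 0 -> e V (U i)) ->
  (forall i j : 'I_l, val j = (val i).+1 -> e (U i) (U j)) ->
  forall i : 'I_l, U i \in ball e (nat_of_ord i).+1 V.
Proof.
move=> h0 hS [n hn]; elim: n hn => [|n IH] hn.
  by apply: (ball_edge (ball_self e 0 V)); apply: h0.
have hn' : n < l by lia.
apply: (ball_edge (IH hn')); exact: (hS (Ordinal hn') (Ordinal hn)).
Qed.

Lemma pathUE (i : 'I_l) : U i \in ball E (nat_of_ord i).+1 V.
Proof. by apply: pathU => [j /= ->|j j' /= ->]; rewrite ?eqxx. Qed.

Lemma pathUE' (i : 'I_l) : U i \in ball E' (nat_of_ord i).+1 V.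
Proof. by apply: pathU => [j /= ->|j j' /= ->]; rewrite ?eqxx. Qed.

Lemma homA : forall a b, e1 a b -> E (A a) (A b).
Proof. by []. Qed.
Lemma homA' : forall a b, e1 a b -> E' (A a) (A b).
Proof. by []. Qed.
Lemma homB : forall a b, e2 a b -> E (B a) (B b).
Proof. by []. Qed.

Definition f2' (b : T2) : GVt := if b == v then W else B b.

Lemma homB' : forall a b, e2 a b -> E' (f2' a) (f2' b).
Proof.
move=> a b h; rewrite /f2'.
have [ea|na] := eqVneq a v; have [eb|nb] := eqVneq b v => /=.
- by subst; rewrite i2 in h.
- by subst; rewrite eqxx h orbT.
- by subst; rewrite eqxx s2 h orbT.
- by rewrite h na nb.
Qed.

Lemma WV : V \in ball E 1 W.
Proof. by apply: (ball_edge (ball_self E 0 W)); rewrite /= !eqxx. Qed.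
Lemma WV' : V \in ball E' 1 W.
Proof. by apply: (ball_edge (ball_self E' 0 W)); rewrite /= !eqxx. Qed.

Lemma reachE (z : GVt) : exists n, z \in ball E n W.
Proof.
case: z => [[a|b]|i].
- exists (d1 w a); apply: (ball_hom homA); exact: dist_ball.
- exists (1 + d2 v b); apply: ball_trans WV _; apply: (ball_hom homB); exact: dist_ball.
- exists (1 + (val i).+1); apply: ball_trans WV _; exact: pathUE.
Qed.

Lemma reachE' (z : GVt) : exists n, z \in ball E' n W.
Proof.
case: z => [[a|b]|i].
- exists (d1 w a); apply: (ball_hom homA'); exact: dist_ball.
- have [->|nb] := eqVneq b v; first by exists 1; exact: WV'.
  exists (d2 v b); have := ball_hom homB' (dist_ball (c2 v b)).
  by rewrite /f2' eqxx (negbTE nb).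
- exists (1 + (val i).+1); apply: ball_trans WV' _; exact: pathUE'.
Qed.

Lemma connE : connected_graph E.
Proof.
move=> x y; have [n hx] := reachE x; have [m hy] := reachE y.
apply: connect_trans (ball_connect (ball_sym symE hx)) (ball_connect hy).
Qed.

Lemma connE' : connected_graph E'.
Proof.
move=> x y; have [n hx] := reachE' x; have [m hy] := reachE' y.
apply: connect_trans (ball_connect (ball_sym symE' hx)) (ball_connect hy).
Qed.


Definition PA (a : T1) (z : GVt) : nat :=
  match z with inl (inl a') => d1 a a' | inl (inr b) => d1 w a + 1 + d2 v b | inr i => d1 w a + 2 + i end.
Definition PB (b : T2) (z : GVt) : nat :=
  match z with inl (inl a) => d2 v b + 1 + d1 w a | inl (inr b') => d2 b b' | inr i => d2 v b + 1 + i end.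
Definition PU (i : 'I_l) (z : GVt) : nat :=
  match z with inl (inl a) => i + 2 + d1 w a | inl (inr b) => i + 1 + d2 v b | inr j => i - j end.

Ltac lipt := first [ by apply: dist_edge
 | by move=> h; have := dist_edge v c2 h; lia
 | by move=> h; have := dist_edge w c1 h; lia
 | by move=> /andP [/eqP -> /eqP ->]; rewrite ?dist_self; try rewrite (dist_sym _ w s1 c1); try rewrite (dist_sym _ v s2 c2); rewrite ?dist_self; lia
 | by move=> /orP [/eqP h|/eqP h]; lia ].

Lemma lipPA a : forall x y, E x y -> PA a y <= PA a x + 1.
Proof. move=> [[x|x]|i] [[y|y]|j] //=; lipt. Qed.
Lemma lipPB b : forall x y, E x y -> PB b y <= PB b x + 1.
Proof. move=> [[x|x]|i] [[y|y]|j] //=; lipt. Qed.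
Lemma lipPU k : forall x y, E x y -> PU k y <= PU k x + 1.
Proof. move=> [[x|x]|i] [[y|y]|j] //=; lipt. Qed.

Lemma lbA a z : PA a z <= dist E (A a) z.
Proof. have := dist_lip (A a) z connE (@lipPA a); by rewrite /= dist_self. Qed.
Lemma lbB b z : PB b z <= dist E (B b) z.
Proof. have := dist_lip (B b) z connE (@lipPB b); by rewrite /= dist_self. Qed.
Lemma lbU i z : PU i z <= dist E (U i) z.
Proof. have := dist_lip (U i) z connE (@lipPU i); by rewrite /= subnn. Qed.

Definition QW (z : GVt) : nat :=
  match z with inl (inl a) => d1 w a | inl (inr b) => if b == v then 1 else d2 v b | inr i => i + 2 end.

Ltac genl := repeat match goal with |- context [dist ?e ?x ?y] => let d := fresh "d" in move: (dist e x y) => d end;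
  repeat match goal with |- context [QW ?z] => let q := fresh "q" in move: (QW z) => q end.
Ltac lia' := genl; lia.
Ltac lia'' := genl; repeat match goal with |- context [ecc ?e ?z] => let q := fresh "q" in move: (ecc e z) => q end; lia.

Lemma ubW' z : dist E' W z <= QW z.
Proof.
apply: dist_le; case: z => [[a|b]|i]; rewrite [QW _]/=.
- apply: (ball_hom homA'); exact: dist_ball.
- have [->|nb] := eqVneq b v; first exact: WV'.
  have := ball_hom homB' (dist_ball (c2 v b)); by rewrite /f2' eqxx (negbTE nb).
- apply: (@ball_le _ _ (1 + (nat_of_ord i).+1)); first by rewrite /QW; lia.
  apply: ball_trans WV' _; exact: pathUE'.
Qed.

Lemma ub' s z : dist E' s z <= QW s + QW z.
Proof.
have := dist_tri s W z connE'; rewrite (dist_sym s W symE' connE').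
have := ubW' s; have := ubW' z; lia.
Qed.

Lemma ubAA' a a' : dist E' (A a) (A a') <= d1 a a'.
Proof. apply: dist_le; apply: (ball_hom homA'); exact: dist_ball. Qed.

Lemma ubBB' b b' : b != v -> b' != v -> dist E' (B b) (B b') <= d2 b b'.
Proof.
move=> nb nb'; apply: dist_le; have := ball_hom homB' (dist_ball (c2 b b')).
by rewrite /f2' (negbTE nb) (negbTE nb').
Qed.


Lemma exists_b0 : exists b0, b0 != v.
Proof.
case/card_gt1P: card2 => x [y [_ _ hxy]].
have [exv|nxv] := eqVneq x v; last by exists x.
by exists y; rewrite -exv eq_sym.
Qed.

Lemma Rpos : 0 < R.
Proof.
have [b0 hb0] := exists_b0.
have hne : v != b0 by rewrite eq_sym.
exact: leq_trans (dist_pos c2 hne) (ecc_ge e2 v b0).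
Qed.

Lemma astar : exists a, d1 w a = K.
Proof. exact: ecc_attained. Qed.
Lemma bstar : exists b, d2 v b = R.
Proof. exact: ecc_attained. Qed.

Lemma nbr_v : exists b1, e2 v b1.
Proof.
have [b hb] := bstar.
have [z [hz1 hz2]] := levels c2 s2 hb (leq0n R).
have [b1 [hb1 _]] := hz2 Rpos; exists b1; by rewrite -(dist0 c2 hz1).
Qed.

Lemma Kge : 2 <= K.
Proof. lia. Qed.

Lemma nbr_w : exists a1, e1 w a1.
Proof.
have [a ha] := astar.
have [z [hz1 hz2]] := levels c1 s1 ha (leq0n K).
have [a1 [ha1 _]] := hz2 (leq_trans (isT : 0 < 2) Kge); exists a1; by rewrite -(dist0 c1 hz1).
Qed.

Lemma QW_le z : QW z <= maxn K R.
Proof.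
case: z => [[a|b]|i] /=.
- have := ecc_ge e1 w a; lia'.
- case: eqP => _; [have := Kge; lia | have := ecc_ge e2 v b; lia].
- have := ltn_ord i; lia'.
Qed.

Lemma eccW' : ecc E' W <= maxn K R.
Proof. apply: ecc_le => z; have := ub' W z; have := QW_le z; rewrite /= dist_self; lia'. Qed.
Lemma eccV' : ecc E' V <= (maxn K R).+1.
Proof. apply: ecc_le => z; have := ub' V z; have := QW_le z; rewrite /= eqxx; lia'. Qed.
Lemma eccU' (i : 'I_l) : ecc E' (U i) <= i + 2 + maxn K R.
Proof. apply: ecc_le => z; have := ub' (U i) z; have := QW_le z; rewrite /=; lia'. Qed.

Lemma eccA'_le a : ecc E' (A a) <= d1 w a + maxn K R.
Proof.
apply: ecc_le => -[[a'|b]|i].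
- have := ubAA' a a'; have := dist_tri a w a' c1; rewrite (dist_sym a w s1 c1).
  have := ecc_ge e1 w a'; lia'.
- have := ub' (A a) (B b); have := QW_le (B b); rewrite [QW (A a)]/=; lia'.
- have := ub' (A a) (U i); have := QW_le (U i); rewrite [QW (A a)]/=; lia'.
Qed.

Lemma eccA'_pt a : ecc E' (A a) <= ecc E (A a).
Proof.
apply: ecc_le => z; apply: leq_trans (ecc_ge _ _ z); apply: leq_trans (lbA a z).
case: z => [[a'|b]|i].
- exact: ubAA'.
- have := ub' (A a) (B b); rewrite /=; case: eqP => [->|_]; rewrite ?dist_self; lia'.
- have := ub' (A a) (U i); rewrite /=; lia'.
Qed.

Lemma eccB'_pt b : b != v -> ecc E' (B b) <= ecc E (B b).
Proof.
move=> nb; have [as0 has] := astar.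
have hK1 := leq_trans (lbB b (A as0)) (ecc_ge _ _ (A as0)); rewrite /= has in hK1.
apply: ecc_le => z; case: z => [[a'|b']|i].
- apply: leq_trans (ecc_ge _ _ (A a')); apply: leq_trans (lbB b (A a')).
  have := ub' (B b) (A a'); rewrite /= (negbTE nb); lia'.
- have [eb|nb'] := eqVneq b' v.
    move: hK1; have := ub' (B b) (B b'); rewrite /= (negbTE nb) eb eqxx; lia''.
  apply: leq_trans (ecc_ge _ _ (B b')); apply: leq_trans (lbB b (B b')).
  exact: ubBB'.
- move: hK hK1; have := ub' (B b) (U i); rewrite /= (negbTE nb); have := ltn_ord i; lia''.
Qed.

Lemma eccW_K : K <= ecc E W.
Proof.
have [as0 has] := astar; have := leq_trans (lbA w (A as0)) (ecc_ge _ _ (A as0)); by rewrite /= has.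
Qed.
Lemma eccW_R : R.+1 <= ecc E W.
Proof.
have [bs hbs] := bstar; have := leq_trans (lbA w (B bs)) (ecc_ge _ _ (B bs)).
rewrite /= hbs dist_self; lia'.
Qed.
Lemma eccA_R a : d1 w a + 1 + R <= ecc E (A a).
Proof.
have [bs hbs] := bstar; have := leq_trans (lbA a (B bs)) (ecc_ge _ _ (B bs)); by rewrite /= hbs.
Qed.
Lemma eccV_K : K.+1 <= ecc E V.
Proof.
have [as0 has] := astar; have := leq_trans (lbB v (A as0)) (ecc_ge _ _ (A as0)).
rewrite /= has dist_self; lia'.
Qed.
Lemma eccV_R : R <= ecc E V.
Proof.
have [bs hbs] := bstar; have := leq_trans (lbB v (B bs)) (ecc_ge _ _ (B bs)); by rewrite /= hbs.
Qed.
Lemma eccU_K (i : 'I_l) : i + 2 + K <= ecc E (U i).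
Proof.
have [as0 has] := astar; have := leq_trans (lbU i (A as0)) (ecc_ge _ _ (A as0)); by rewrite /= has.
Qed.
Lemma eccU_R (i : 'I_l) : i + 1 + R <= ecc E (U i).
Proof.
have [bs hbs] := bstar; have := leq_trans (lbU i (B bs)) (ecc_ge _ _ (B bs)); by rewrite /= hbs.
Qed.

Lemma eccpos' x : 0 < ecc E' x.
Proof.
have [->|nx] := eqVneq x W; last exact: ecc_pos connE' nx.
by apply: (@ecc_pos _ _ _ V connE').
Qed.
Lemma eccpos x : 0 < ecc E x.
Proof.
have [->|nx] := eqVneq x W; last exact: ecc_pos connE nx.
by apply: (@ecc_pos _ _ _ V connE).
Qed.


Lemma degA_eq a : a != w -> deg E' (A a) = deg E (A a).
Proof.
move=> na; apply: eq_card => z; rewrite !inE; case: z => [[a'|b]|i] //=; by rewrite (negbTE na).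
Qed.

Lemma degU_eq i : deg E' (U i) = deg E (U i).
Proof. apply: eq_card => z; rewrite !inE; by case: z => [[a'|b]|j]. Qed.

Lemma degU_le i : deg E (U i) <= 2.
Proof.
rewrite /deg; set p : GVt := if (i:nat) == 0 then V else U (inord i.-1).
set q : GVt := U (inord i.+1).
apply: leq_trans (_ : #|[set p; q]| <= 2); last by rewrite cards2; case: (_ != _).
apply: subset_leq_card; apply/subsetP => z; rewrite inE !inE.
case: z => [[a|b]|j] //=.
- move=> /andP [/eqP -> /eqP h]; by rewrite /p h /= eqxx.
- move=> /orP [/eqP h|/eqP h]; apply/orP; [right|left].
  + by rewrite /q -h inord_val.
  + by rewrite /p h /= inord_val.
Qed.

Definition swp (z : GVt) : GVt := if z == V then W else if z == W then V else z.
Lemma swpK : involutive swp.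
Proof.
move=> z; rewrite /swp.
have hWV : (W == V) = false by [].
have [->|nV] := eqVneq z V; first by rewrite hWV eqxx.
have [->|nW] := eqVneq z W; first by rewrite eqxx.
by rewrite (negbTE nV) (negbTE nW).
Qed.

Lemma degB_le b : b != v -> deg E (B b) <= deg E' (B b).
Proof.
move=> nb; rewrite /deg -(card_imset _ (can_inj swpK)).
apply: subset_leq_card; apply/subsetP => z /imsetP [x]; rewrite inE => hx ->; rewrite inE.
case: x hx => [[a|b']|i] /=; rewrite ?(negbTE nb) //.
have [eb|nb'] := eqVneq b' v.
  by subst b'; rewrite /swp eqxx /= eqxx andbT s2.
move=> h; rewrite /swp.
have -> : (B b' == V) = false by apply/eqP => -[]; apply/eqP.
have -> : (B b' == W) = false by [].
by rewrite /= h nb'.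
Qed.

Lemma degW : deg E W + deg e2 v <= deg E' W.
Proof.
rewrite /deg; set NW := [set y | E W y]; set img := (fun b => B b) @: [set b | e2 v b].
have hi : #|img| = #|[set b | e2 v b]| by apply: card_imset => x y [].
have h0 : NW :&: img = set0.
  apply/setP => z; rewrite !inE; apply/negP => /andP [hz /imsetP [b]].
  rewrite inE => hb hzb; subst z; move: hz => /= /andP [_ /eqP hbv]; subst b.
  by rewrite i2 in hb.
rewrite -hi; have := cardsU NW img; rewrite h0 cards0 subn0 => <-.
apply: subset_leq_card; apply/subsetP => z; rewrite !inE => /orP [|/imsetP [b]].
- case: z => [[a|b]|i] //=; by move=> /andP [-> ->].
- by rewrite inE => hb ->; rewrite /= eqxx hb orbT.
Qed.

Lemma degV : deg E V <= deg e2 v + 2.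
Proof.
rewrite /deg; set img := (fun b => B b) @: [set b | e2 v b].
have hi : #|img| = #|[set b | e2 v b]| by apply: card_imset => x y [].
apply: leq_trans (_ : #|img :|: [set W; U ord0]| <= _).
  apply: subset_leq_card; apply/subsetP => z; rewrite !inE.
  case: z => [[a|b]|i] /=.
  - by move=> /andP [_ /eqP ->]; rewrite eqxx orbT.
  - by move=> h; apply/orP; left; apply/imsetP; exists b; rewrite ?inE.
  - move=> /andP [_ /eqP h]; apply/orP; right; apply/eqP; congr inr; exact: val_inj.
rewrite cardsU hi cards2; case: (_ != _); lia.
Qed.

Lemma degV' : 2 <= deg E' V.
Proof.
apply/card_gt1P; exists W, (U ord0); by rewrite !inE /= !eqxx.
Qed.

Lemma degW2 : 2 <= deg E W.
Proof.
have [a1 ha1] := nbr_w; apply/card_gt1P; exists (A a1), V; by rewrite !inE /= !eqxx.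
Qed.

Lemma degv1 : 0 < deg e2 v.
Proof. have [b1 hb1] := nbr_v; apply/card_gt0P; exists b1; by rewrite inE. Qed.

Lemma degA2 y b c : e1 y b -> e1 y c -> b != c -> 2 <= deg E (A y).
Proof.
move=> hb hc nbc; apply/card_gt1P; exists (A b), (A c); rewrite !inE /= hb hc; split => //; apply: contra nbc => /eqP [->].
Qed.

Lemma degA1 y b : e1 y b -> 0 < deg E (A y).
Proof. move=> hb; apply/card_gt0P; exists (A b); by rewrite inE. Qed.


Definition Pj (j : nat) (y : T1) : bool :=
  (d1 w y == j) && ((j < K) ==> [exists b, e1 y b && (d1 w b == j.+1)]).
Definition ysel j := odflt w [pick y | Pj j y].

Lemma ysel_spec j : j <= K -> Pj j (ysel j).
Proof.
move=> hj; rewrite /ysel; case: pickP => [y //|hn]; exfalso.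
have [a ha] := astar; have [z [hz1 hz2]] := levels c1 s1 ha hj.
move: (hn z); rewrite /Pj hz1 eqxx /=; case: ltnP => //= hjK.
have [b [hb1 hb2]] := hz2 hjK; move/existsP; apply; exists b; by rewrite hb1 hb2 eqxx.
Qed.

Lemma ysel_lev j : j <= K -> d1 w (ysel j) = j.
Proof. by move/ysel_spec => /andP [/eqP]. Qed.

Lemma ysel_nw j : 0 < j -> j <= K -> ysel j != w.
Proof.
move=> hj hjK; apply/eqP => h; have := ysel_lev hjK; rewrite h dist_self; lia.
Qed.

Lemma ysel_down j : 0 < j -> j <= K -> exists c, e1 (ysel j) c /\ d1 w c = j.-1.
Proof. move=> hj hjK; apply: descend c1 s1 _; rewrite ysel_lev //; lia. Qed.

Lemma ysel_deg2 j : 0 < j -> j < K -> 2 <= deg E (A (ysel j)).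
Proof.
move=> hj hjK; have := ysel_spec (ltnW hjK); rewrite /Pj hjK /= => /andP [_ /existsP [b /andP [hb /eqP hbl]]].
have [c [hc hcl]] := ysel_down hj (ltnW hjK).
apply: degA2 hb hc _; apply/eqP => hbc; subst c; lia.
Qed.

Lemma ysel_deg1 j : 0 < j -> j <= K -> 0 < deg E (A (ysel j)).
Proof. move=> hj hjK; have [c [hc _]] := ysel_down hj hjK; exact: degA1 hc. Qed.

Definition tt (e : rel GVt) (x : GVt) : rat := ((deg e x)%:R / (ecc e x)%:R)%R.
Definition gg (x : GVt) : rat := (tt E' x - tt E x)%R.

Lemma xi_split (e : rel GVt) : xi_ee e =
  (\sum_(a : T1) tt e (A a) + \sum_(b : T2) tt e (B b) + \sum_(i : 'I_l) tt e (U i))%R.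
Proof. by rewrite /xi_ee big_sumType big_sumType. Qed.

Local Open Scope ring_scope.

Lemma ggA a : a != w -> 0 <= gg (A a).
Proof.
move=> na; rewrite /gg /tt subr_ge0 degA_eq //.
apply: tle => //; [exact: eccpos' | exact: eccA'_pt].
Qed.

Lemma ggB b : b != v -> 0 <= gg (B b).
Proof.
move=> nb; rewrite /gg /tt subr_ge0; apply: tle; [exact: degB_le | exact: eccpos' | exact: eccB'_pt].
Qed.


Lemma Kpos : (0 < K)%N.
Proof. have := Kge; lia. Qed.

Lemma ggU1 i : (R <= K)%N -> 0 <= gg (U i).
Proof.
move=> hRK; rewrite /gg /tt subr_ge0 degU_eq; apply: tle => //; first exact: eccpos'.
have := eccU' i; have := eccU_K i; move: (ecc E' _) (ecc E _) => x y; lia.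
Qed.

Lemma WV1 : (R <= K)%N -> 0 < gg W + gg V.
Proof.
move=> hRK; rewrite /gg /tt.
have hW' : (ecc E' W <= K)%N by have := eccW'; lia.
have hV' : (ecc E' V <= K.+1)%N by have := eccV'; lia.
have h1 := tle degW (eccpos' W) hW'.
have h2 := tle (leqnn (deg E W)) Kpos eccW_K.
have h3 := tle degV' (eccpos' V) hV'.
have h4 := tle degV (ltn0Sn K) eccV_K.
have hx := invlt Kpos.
have hm : 1 <= (deg e2 v)%:R :> rat by rewrite ler1n degv1.
have hmx : 0 < (deg e2 v)%:R * ((K%:R)^-1 - (K.+1%:R)^-1) :> rat.
  by apply: mulr_gt0; move: hm hx; geninv; lra.
rewrite !natrD in h1 h4; move: h1 h2 h3 h4 hmx; geninv; lra.
Qed.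

Lemma WV2 : (K < R)%N -> 0 <= gg W + gg V.
Proof.
move=> hRK; rewrite /gg /tt.
have hW' : (ecc E' W <= R)%N by have := eccW'; lia.
have hV' : (ecc E' V <= R.+1)%N by have := eccV'; lia.
have h1 := tle degW (eccpos' W) hW'.
have h2 := tle (leqnn (deg E W)) (ltn0Sn R) eccW_R.
have h3 := tle degV' (eccpos' V) hV'.
have h4 := tle degV Rpos eccV_R.
have hx := invlt Rpos.
have hd : 2 <= (deg E W)%:R :> rat by rewrite (ler_nat _ 2) degW2.
have hmx : 0 <= ((deg E W)%:R - 2) * ((R%:R)^-1 - (R.+1%:R)^-1) :> rat.
  by apply: mulr_ge0; move: hd hx; geninv; lra.
rewrite !natrD in h1 h4; move: h1 h2 h3 h4 hmx; geninv; lra.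
Qed.

Lemma pairU2 (j : nat) (hj : (j < l)%N) : (K < R)%N ->
  0 <= gg (A (ysel j.+1)) + gg (U (inord j)).
Proof.
move=> hRK; rewrite /gg /tt.
have hjK : (j.+1 <= K)%N by lia.
have hlev := ysel_lev hjK.
have hnw := ysel_nw (ltn0Sn j) hjK.
rewrite degA_eq // degU_eq.
have hij : nat_of_ord (inord j : 'I_l) = j by rewrite inordK.
have hA' : (ecc E' (A (ysel j.+1)) <= j.+1 + R)%N.
  have := eccA'_le (ysel j.+1); rewrite hlev; lia.
have hA : ((j.+1 + R).+1 <= ecc E (A (ysel j.+1)))%N.
  have := eccA_R (ysel j.+1); rewrite hlev; lia.
have hU' : (ecc E' (U (inord j)) <= (j.+1 + R).+1)%N.
  have := eccU' (inord j); rewrite hij; lia.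
have hU : (j.+1 + R <= ecc E (U (inord j)))%N.
  have := eccU_R (inord j); rewrite hij; lia.
have hp : (0 < j.+1 + R)%N by lia.
have a1 := tle (leqnn (deg E (A (ysel j.+1)))) (eccpos' _) hA'.
have a2 := tle (leqnn (deg E (A (ysel j.+1)))) (ltn0Sn _) hA.
have u1 := tle (leqnn (deg E (U (inord j)))) (eccpos' _) hU'.
have u2 := tle (leqnn (deg E (U (inord j)))) hp hU.
have hx := invlt hp.
have hd : (deg E (U (inord j)))%:R <= (deg E (A (ysel j.+1)))%:R :> rat.
  rewrite ler_nat; apply: leq_trans (degU_le _) (ysel_deg2 _ _) => //; lia.
have hmx : 0 <= ((deg E (A (ysel j.+1)))%:R - (deg E (U (inord j)))%:R) *
   (((j.+1 + R)%:R)^-1 - ((j.+1 + R).+1%:R)^-1) :> rat.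
  by apply: mulr_ge0; move: hd hx; geninv; lra.
move: a1 a2 u1 u2 hmx; geninv; lra.
Qed.

Lemma lastA2 : (K < R)%N -> 0 < gg (A (ysel K)).
Proof.
move=> hRK; rewrite /gg /tt.
have hlev := ysel_lev (leqnn K).
have hnw := ysel_nw Kpos (leqnn K).
rewrite degA_eq // subr_gt0.
have hA' : (ecc E' (A (ysel K)) <= K + R)%N.
  have := eccA'_le (ysel K); rewrite hlev; lia.
have hA : ((K + R).+1 <= ecc E (A (ysel K)))%N.
  have := eccA_R (ysel K); rewrite hlev; lia.
have hp : (0 < K + R)%N by have := Kpos; lia.
have a1 := tle (leqnn (deg E (A (ysel K)))) (eccpos' _) hA'.
have a2 := tle (leqnn (deg E (A (ysel K)))) (ltn0Sn _) hA.
have := tlt (ysel_deg1 Kpos (leqnn K)) hp (ltnSn _).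
move=> h; apply: le_lt_trans a2 _; exact: lt_le_trans h a1.
Qed.


Theorem main : xi_ee E < xi_ee E'.
Proof.
rewrite !xi_split -subr_gt0.
have eqA : \sum_a gg (A a) = \sum_a tt E' (A a) - \sum_a tt E (A a) by rewrite -sumrB.
have eqB : \sum_b gg (B b) = \sum_b tt E' (B b) - \sum_b tt E (B b) by rewrite -sumrB.
have eqU : \sum_i gg (U i) = \sum_i tt E' (U i) - \sum_i tt E (U i) by rewrite -sumrB.
rewrite (bigD1 w) //= (bigD1 v) //= in eqA eqB.
have hB : 0 <= \sum_(b | b != v) gg (B b) by apply: sumr_ge0 => b; exact: ggB.
have hA : 0 <= \sum_(a | a != w) gg (A a) by apply: sumr_ge0 => a; exact: ggA.
case: (leqP R K) => hRK.
  have hU : 0 <= \sum_i gg (U i) by apply: sumr_ge0 => i _; exact: ggU1.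
  have := WV1 hRK; lra.
have hWV := WV2 hRK.
have S1 : \sum_(j < K) gg (A (ysel j.+1)) <= \sum_(a | a != w) gg (A a).
  have -> : \sum_(j < K) gg (A (ysel j.+1)) =
      \sum_(a in (fun j : 'I_K => ysel j.+1) @: [set: 'I_K]) gg (A a).
    rewrite big_imset /=; first by apply: eq_bigl => j; rewrite inE.
    move=> j1 j2 _ _ /= h; apply/val_inj => /=.
    have := ysel_lev (ltn_ord j1); have := ysel_lev (ltn_ord j2); rewrite h => -> [] //.
  rewrite [X in _ <= X]big_mkcond [X in X <= _]big_mkcond /=; apply: ler_sum => a _.
  case: ifP => hY.
    by case/imsetP: hY => j _ ->; rewrite ysel_nw ?ltn_ord.
  case: ifP => // hnw; exact: ggA.
have S2 : \sum_(i < l) gg (U i) = \sum_(j < K) (if (j < l)%N then gg (U (inord j)) else 0).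
  rewrite (eq_bigr (fun i : 'I_l => gg (U (inord i)))); last by move=> i _; rewrite inord_val.
  rewrite (big_ord_widen K (fun j : nat => gg (U (inord j)))) ?big_mkcond //; lia.
have S3 : 0 < \sum_(j < K) (gg (A (ysel j.+1)) + (if (j < l)%N then gg (U (inord j)) else 0)).
  have hK1 : (K.-1 < K)%N by have := Kpos; lia.
  rewrite (bigD1 (Ordinal hK1)) //=.
  have hf : (K.-1 < l)%N = false by apply/negP => h; lia.
  have ht := lastA2 hRK.
  have hr : 0 <= \sum_(j < K | j != Ordinal hK1)
      (gg (A (ysel j.+1)) + (if (j < l)%N then gg (U (inord j)) else 0)).
    apply: sumr_ge0 => j _; case: ifP => hjl; first exact: pairU2.
    rewrite addr0; apply: ggA; rewrite ysel_nw ?ltn_ord //.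
  rewrite hf addr0 prednK ?Kpos //; lra.
rewrite big_split /= in S3; lra.
Qed.

End Main.

Unset Implicit Arguments.

Theorem theorem3p1 (T1 T2 : finType) (e1 : rel T1) (e2 : rel T2)
  (w : T1) (v : T2) (k l : nat) :
  simple_graph e1 -> connected_graph e1 -> 2 <= #|T1| ->
  simple_graph e2 -> connected_graph e2 -> 2 <= #|T2| ->
  k = ecc e1 w -> 1 <= l -> l.+1 <= k ->
  (xi_ee (G_edge e1 e2 w v l) < xi_ee (G'_edge e1 e2 w v l))%R.
Proof.
move=> [s1 i1] c1 _ [s2 i2] c2 h2 hkdef hl hk.
subst k; case: l hl hk => [//|l'] _ hk.
by apply: main.
Qed.
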